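(* Let $ABC$ be a triangle with Nagel point $N$. Let $A_0, B_0, C_0$ be the points where the $A$-, $B$-, $C$-excircles touch the sides $BC, CA, AB$ respectively. Let $d>0$ and consider six points $A_1, A_2$ on line $BC$, $B_1, B_2$ on line $CA$, $C_1, C_2$ on line $AB$ such that \[ A_1A_0 = A_2A_0 = B_1B_0 = B_2B_0 = C_1C_0 = C_2C_0 = d, \] where $A_1, B_1, C_1$ lie on the rays $A_0C, B_0A, C_0B$ and $A_2, C_2, B_2$ lie on the rays $A_0B, C_0A, B_0C$ respectively. Then the radical axis of the circumcircles $\odot(A_1B_1C_1)$ and $\odot(A_2B_2C_2)$ passes through the Nagel point $N$, the centroid, and the incenter of $ABC$.
   Context: The Nagel point of $ABC$ is the common point of the lines $AA_0, BB_0, CC_0$ joining each vertex to the touch point of the opposite excircle with the opposite side. *)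

(* Defs.v *)
(* Euclidean plane geometry over an ordered field R,
   points are pairs (x, y) in R * R. Everything is expressed with squared
   distances so no square roots are needed. *)
From HB Require Import structures.
From mathcomp Require Import all_boot all_order all_algebra.
Set Implicit Arguments. Unset Strict Implicit. Unset Printing Implicit Defensive.
Import Order.TTheory GRing.Theory Num.Theory.
Local Open Scope ring_scope.

Section Geom.
Variable R : realFieldType.
Definition pt := (R * R)%type.

Definition cross (P Q X : pt) : R :=
  (Q.1 - P.1) * (X.2 - P.2) - (Q.2 - P.2) * (X.1 - P.1).
Definition dot (U V : pt) : R := U.1 * V.1 + U.2 * V.2.
Definition vsub (P Q : pt) : pt := (P.1 - Q.1, P.2 - Q.2).
Definition sqdist (P Q : pt) : R := dot (vsub P Q) (vsub P Q).

Definition on_line (P Q X : pt) : Prop := cross P Q X = 0.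
Definition on_ray (P Q X : pt) : Prop :=
  exists t : R, 0 <= t /\ X = (P.1 + t * (Q.1 - P.1), P.2 + t * (Q.2 - P.2)).
Definition sqdist_line (P Q X : pt) : R := (cross P Q X) ^+ 2 / sqdist P Q.

Definition nondeg_tri (A B C : pt) : Prop := cross A B C != 0.

Definition is_excenter (A B C J : pt) : Prop :=
  sqdist_line B C J = sqdist_line C A J /\
  sqdist_line C A J = sqdist_line A B J /\
  cross B C J * cross B C A < 0.

Definition excircle_touch (A B C X : pt) : Prop :=
  exists J, is_excenter A B C J /\ on_line B C X /\ dot (vsub J X) (vsub C B) = 0.

Definition is_incenter (A B C I : pt) : Prop :=
  sqdist_line B C I = sqdist_line C A I /\
  sqdist_line C A I = sqdist_line A B I /\
  0 < cross B C I * cross B C A /\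
  0 < cross C A I * cross C A B /\
  0 < cross A B I * cross A B C.

Definition centroid (A B C : pt) : pt :=
  ((A.1 + B.1 + C.1) / 3%:R, (A.2 + B.2 + C.2) / 3%:R).

Definition is_circumcenter (P Q S O : pt) : Prop :=
  sqdist O P = sqdist O Q /\ sqdist O Q = sqdist O S.

Definition power (O P X : pt) : R := sqdist X O - sqdist P O.

Definition on_radical_axis (O1 P1 O2 P2 X : pt) : Prop :=
  power O1 P1 X = power O2 P2 X.
End Geom.

(* Main.v *)
Require Import Defs.
From mathcomp Require Import all_boot all_order all_algebra.
From mathcomp Require Import ring lra.
Import Order.TTheory GRing.Theory Num.Theory.
Local Open Scope ring_scope.
Set Implicit Arguments. Unset Strict Implicit. Unset Printing Implicit Defensive.


Section Aux.
Variable R : realFieldType.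
Implicit Types (A B C P Q S X Y O : pt R).

Definition bc A B C (u v w : R) : pt R :=
  (u * A.1 + v * B.1 + w * C.1, u * A.2 + v * B.2 + w * C.2).

Definition det3 (u1 v1 w1 u2 v2 w2 u3 v3 w3 : R) : R :=
  u1 * (v2 * w3 - w2 * v3) - v1 * (u2 * w3 - w2 * u3) + w1 * (u2 * v3 - v2 * u3).

Lemma cross_bc A B C u1 v1 w1 u2 v2 w2 u3 v3 w3 :
  u1 + v1 + w1 = 1 -> u2 + v2 + w2 = 1 -> u3 + v3 + w3 = 1 ->
  cross (bc A B C u1 v1 w1) (bc A B C u2 v2 w2) (bc A B C u3 v3 w3) =
  det3 u1 v1 w1 u2 v2 w2 u3 v3 w3 * cross A B C.
Proof.
move=> h1 h2 h3.
have -> : w1 = 1 - u1 - v1 by rewrite -h1; ring.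
have -> : w2 = 1 - u2 - v2 by rewrite -h2; ring.
have -> : w3 = 1 - u3 - v3 by rewrite -h3; ring.
rewrite /cross /bc /det3 /=; ring.
Qed.

Lemma dot_bc A B C l1 l2 l3 k1 k2 k3 :
  l1 + l2 + l3 = 0 -> k1 + k2 + k3 = 0 ->
  dot (l1 * A.1 + l2 * B.1 + l3 * C.1, l1 * A.2 + l2 * B.2 + l3 * C.2)
      (k1 * A.1 + k2 * B.1 + k3 * C.1, k1 * A.2 + k2 * B.2 + k3 * C.2) =
  - ((l2 * k3 + l3 * k2) * sqdist B C + (l3 * k1 + l1 * k3) * sqdist C A
     + (l1 * k2 + l2 * k1) * sqdist A B) / 2%:R.
Proof.
move=> h1 h2.
have -> : l3 = - l1 - l2 by rewrite -(subr0 l3) -h1; ring.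
have -> : k3 = - k1 - k2 by rewrite -(subr0 k3) -h2; ring.
rewrite /sqdist /dot /vsub /=; by field.
Qed.

Lemma vsub_bc A B C u1 v1 w1 u2 v2 w2 :
  vsub (bc A B C u1 v1 w1) (bc A B C u2 v2 w2) =
  ((u1 - u2) * A.1 + (v1 - v2) * B.1 + (w1 - w2) * C.1,
   (u1 - u2) * A.2 + (v1 - v2) * B.2 + (w1 - w2) * C.2).
Proof. rewrite /vsub /bc /=; congr (_, _); ring. Qed.

Lemma sqdist_bc A B C u1 v1 w1 u2 v2 w2 :
  u1 + v1 + w1 = 1 -> u2 + v2 + w2 = 1 ->
  sqdist (bc A B C u1 v1 w1) (bc A B C u2 v2 w2) =
  - ((v1 - v2) * (w1 - w2) * sqdist B C + (w1 - w2) * (u1 - u2) * sqdist C A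
     + (u1 - u2) * (v1 - v2) * sqdist A B).
Proof.
move=> h1 h2; rewrite /sqdist vsub_bc -/(sqdist _ _) dot_bc.
- rewrite -/(sqdist C A) -/(sqdist A B); by field.
- rewrite (_ : u1 - u2 + (v1 - v2) + (w1 - w2) = (u1 + v1 + w1) - (u2 + v2 + w2)); [by rewrite h1 h2 subrr | ring].
- rewrite (_ : u1 - u2 + (v1 - v2) + (w1 - w2) = (u1 + v1 + w1) - (u2 + v2 + w2)); [by rewrite h1 h2 subrr | ring].
Qed.

Lemma bc_rot A B C u v w : bc B C A u v w = bc A B C w u v.
Proof. rewrite /bc; congr (_, _); ring. Qed.

Lemma bcA A B C : A = bc A B C 1 0 0.
Proof. rewrite /bc; case: A => x y /=; congr (_, _); ring. Qed.
Lemma bcB A B C : B = bc A B C 0 1 0.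
Proof. rewrite /bc; case: B => x y /=; congr (_, _); ring. Qed.
Lemma bcC A B C : C = bc A B C 0 0 1.
Proof. rewrite /bc; case: C => x y /=; congr (_, _); ring. Qed.

Lemma cross_rot A B C : cross B C A = cross A B C.
Proof. rewrite /cross; ring. Qed.

Lemma power_bary P Q S O X :
  is_circumcenter P Q S O ->
  power O P X * (cross P Q S) ^+ 2 =
  - (cross X Q S * cross P X S * sqdist P Q + cross P X S * cross P Q X * sqdist Q S
     + cross X Q S * cross P Q X * sqdist P S).
Proof.
case=> h1 h2.
have e1 : sqdist O Q - sqdist O P = 0 by rewrite h1 subrr.
have e2 : sqdist O S - sqdist O P = 0 by rewrite -h2 h1 subrr.
apply/eqP; rewrite -subr_eq0; apply/eqP.
transitivity (cross P X S * cross P Q S * (sqdist O Q - sqdist O P)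
   + cross P Q X * cross P Q S * (sqdist O S - sqdist O P)); last by rewrite e1 e2; ring.
move: P Q S O X {h1 h2 e1 e2} => [p1 p2] [q1 q2] [s1 s2] [o1 o2] [x1 x2].
rewrite /power /sqdist /cross /dot /vsub /=; ring.
Qed.

End Aux.


Section Aux2.
Variable R : realFieldType.
Implicit Types (A B C P Q S X Y O : pt R).

Lemma sqdist_ge0 P Q : 0 <= sqdist P Q.
Proof. rewrite /sqdist /dot; apply: addr_ge0; exact: sqr_ge0. Qed.

Lemma lagrange_id P Q X :
  sqdist P Q * sqdist P X = (dot (vsub X P) (vsub Q P)) ^+ 2 + (cross P Q X) ^+ 2.
Proof.
move: P Q X => [p1 p2] [q1 q2] [x1 x2]; rewrite /sqdist /dot /vsub /cross /=; ring.
Qed.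

Lemma len_exists P Q X Y (d : R) :
  sqdist P Q != 0 -> on_line P Q X -> on_ray X P Y -> sqdist Y X = d ^+ 2 -> 0 < d ->
  exists l : R, 0 < l /\ l ^+ 2 = sqdist P Q.
Proof.
move=> hPQ hl [t [ht ->]] hY hd.
set m := dot (vsub X P) (vsub Q P).
have e1 : sqdist P Q * sqdist P X = m ^+ 2 by rewrite lagrange_id hl expr0n /= addr0.
have e2 : sqdist (X.1 + t * (P.1 - X.1), X.2 + t * (P.2 - X.2)) X = t ^+ 2 * sqdist P X.
  by rewrite /sqdist /dot /vsub /=; ring.
rewrite e2 in hY.
have htm : t * m != 0.
  apply/eqP => h0.
  have : (t * m) ^+ 2 = sqdist P Q * d ^+ 2 by rewrite exprMn -e1 -hY; ring.
  rewrite h0 expr0n /= => /esym /eqP; rewrite mulf_eq0 (negbTE hPQ) /= expf_eq0 /=.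
  by rewrite gt_eqF.
exists `|t * m / d|; split.
  by rewrite normr_gt0 mulf_neq0 // invr_eq0 gt_eqF.
rewrite real_normK ?num_real //.
transitivity (sqdist P Q * (t ^+ 2 * sqdist P X) / d ^+ 2).
  by rewrite expr_div_n exprMn -e1; ring.
by rewrite hY mulfK // expf_neq0 // gt_eqF.
Qed.
End Aux2.


Section Aux3.
Variable R : realFieldType.
Implicit Types (A B C P Q S X Y O : pt R).

Lemma tri_ineq A B C (a b c : R) : cross A B C != 0 -> 0 < a -> 0 < b -> 0 < c ->
  a ^+ 2 = sqdist B C -> b ^+ 2 = sqdist C A -> c ^+ 2 = sqdist A B -> a < b + c.
Proof.
move=> hD ha hb hc Ha Hb Hc.
set e := dot (vsub C A) (vsub B A).
have h1 : a ^+ 2 = b ^+ 2 + c ^+ 2 - 2 * e.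
  by rewrite Ha Hb Hc /e /sqdist /dot /vsub /=; ring.
have h2 : (b * c) ^+ 2 = e ^+ 2 + (cross A B C) ^+ 2.
  rewrite -lagrange_id exprMn Hb Hc mulrC; congr (_ * _).
  by rewrite /sqdist /dot /vsub /=; ring.
have hD2 : 0 < (cross A B C) ^+ 2 by rewrite exprn_even_gt0.
set D := cross A B C in h2 hD2.
have hbc0 : 0 < b * c by rewrite mulr_gt0.
have hbc : 0 < b * c + e.
  rewrite ltNge; apply/negP => hle.
  have : 0 <= (- e - b * c) * (- e + b * c) by apply: mulr_ge0; lra.
  rewrite (_ : (- e - b * c) * (- e + b * c) = e ^+ 2 - (b * c) ^+ 2); last by ring.
  rewrite h2; lra.
have : 0 < (b + c - a) * (b + c + a).
  rewrite (_ : (b + c - a) * (b + c + a) = (b + c) ^+ 2 - a ^+ 2); last by ring.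
  rewrite h1; lra.
rewrite pmulr_lgt0; [lra | lra].
Qed.
End Aux3.


Section Aux4.
Variable R : realFieldType.
Implicit Types (A B C P Q S X Y O J : pt R).

Lemma bary_decomp A B C Z : cross A B C != 0 ->
  Z = bc A B C (cross B C Z / cross A B C) (cross C A Z / cross A B C)
              (cross A B Z / cross A B C).
Proof.
move=> hD; move: hD; case: Z => z1 z2; rewrite /bc /cross /= => hD.
by congr (_, _); field.
Qed.

Lemma uniq_perp B C J X Y : sqdist B C != 0 ->
  cross B C X = 0 -> cross B C Y = 0 ->
  dot (vsub J X) (vsub C B) = 0 -> dot (vsub J Y) (vsub C B) = 0 -> X = Y.
Proof.
move=> hBC h1 h2 h3 h4.
have e1 : sqdist B C * (X.1 - Y.1) = 0.
  transitivity ((dot (vsub J Y) (vsub C B) - dot (vsub J X) (vsub C B)) * (C.1 - B.1)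
     - (cross B C X - cross B C Y) * (C.2 - B.2)).
    by rewrite /sqdist /dot /vsub /cross /=; ring.
  by rewrite h1 h2 h3 h4; ring.
have e2 : sqdist B C * (X.2 - Y.2) = 0.
  transitivity ((dot (vsub J Y) (vsub C B) - dot (vsub J X) (vsub C B)) * (C.2 - B.2)
     + (cross B C X - cross B C Y) * (C.1 - B.1)).
    by rewrite /sqdist /dot /vsub /cross /=; ring.
  by rewrite h1 h2 h3 h4; ring.
move/eqP: e1; rewrite mulf_eq0 (negbTE hBC) subr_eq0 /= => /eqP e1.
move/eqP: e2; rewrite mulf_eq0 (negbTE hBC) subr_eq0 /= => /eqP e2.
by case: X Y e1 e2 {h1 h2 h3 h4} => x1 x2 [y1 y2] /= -> ->.
Qed.

Lemma sq_cases (p q : R) : p ^+ 2 = q ^+ 2 -> q = p \/ q = - p.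
Proof.
move=> h.
have : (q - p) * (q + p) = 0 by rewrite (_ : (q - p) * (q + p) = q ^+ 2 - p ^+ 2); [rewrite h subrr | ring].
move/eqP; rewrite mulf_eq0 => /orP [] /eqP h'.
  by left; apply/eqP; rewrite -subr_eq0 h'.
by right; apply/eqP; rewrite -subr_eq0 opprK h'.
Qed.

Lemma sq_contra (k p : R) : 0 <= k -> k * p ^+ 2 < 0 -> False.
Proof. move=> hk h; have := mulr_ge0 hk (sqr_ge0 p); lra. Qed.

Lemma excenter_foot A B C X (a b c : R) :
  cross A B C != 0 -> 0 < a -> 0 < b -> 0 < c ->
  a ^+ 2 = sqdist B C -> b ^+ 2 = sqdist C A -> c ^+ 2 = sqdist A B ->
  a < b + c -> b < c + a -> c < a + b ->
  excircle_touch A B C X ->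
  X = bc A B C 0 ((a + c - b) / (2 * a)) ((a + b - c) / (2 * a)).
Proof.
move=> hD ha hb hc Ha Hb Hc t1 t2 t3 [J [[h1 [h2 hs]] [hX hp]]].
rewrite /sqdist_line -Ha -Hb -Hc in h1 h2.
have hJ := bary_decomp J hD.
have hsum : cross B C J + cross C A J + cross A B J = cross A B C.
  by rewrite /cross; ring.
rewrite (cross_rot A B C) in hs.
move: hJ hsum hs h1 h2.
set P := cross B C J; set Q := cross C A J; set S := cross A B J; set D := cross A B C.
move=> hJ hsum hs h1 h2.
have an : a != 0 by rewrite gt_eqF.
have bn : b != 0 by rewrite gt_eqF.
have cn : c != 0 by rewrite gt_eqF.
have eP : P = a * (P / a) by field.
have eQ : Q = b * (Q / b) by field.
have eS : S = c * (S / c) by field.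
move: hJ hsum hs h1 h2; rewrite eP eQ eS.
set p := P / a; set q := Q / b; set r := S / c.
move=> hJ hsum hs h1 h2.
have ek : forall k x : R, k != 0 -> (k * x) ^+ 2 / k ^+ 2 = x ^+ 2.
  by move=> k x hk; field.
rewrite !ek // in h1 h2.
have [hq|hq] := sq_cases h1;
  (have [hr|hr] : r = p \/ r = - p by apply: sq_cases; rewrite h1 h2); rewrite hq hr in hsum hJ.
- exfalso; apply: (@sq_contra (a * (a + b + c)) p); first by apply: mulr_ge0; lra.
  by move: hs; rewrite -hsum; congr (_ < _); ring.
- exfalso; apply: (@sq_contra (a * (a + b - c)) p); first by apply: mulr_ge0; lra.
  by move: hs; rewrite -hsum; congr (_ < _); ring.
- exfalso; apply: (@sq_contra (a * (a - b + c)) p); first by apply: mulr_ge0; lra.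
  by move: hs; rewrite -hsum; congr (_ < _); ring.
have habc : a - b - c != 0 by rewrite lt_eqF //; lra.
have ep : p = D / (a - b - c) by rewrite -hsum; field.
rewrite ep in hJ.
have hDn : D != 0 by [].
have eJ : J = bc A B C (a / (a - b - c)) (- b / (a - b - c)) (- c / (a - b - c)).
  by rewrite hJ; congr bc; field; rewrite habc hDn.
have hBC : sqdist B C != 0 by rewrite -Ha expf_neq0.
apply: (uniq_perp (J:=J) hBC hX); [ | exact: hp | ].
  have := cross_bc A B C (u1:=0) (v1:=1) (w1:=0) (u2:=0) (v2:=0) (w2:=1)
     (u3:=0) (v3:=(a + c - b) / (2 * a)) (w3:=(a + b - c) / (2 * a)).
  rewrite -bcB -bcC => ->; rewrite ?addr0 ?add0r //; last by field.
  by rewrite /det3; ring.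
have eCB : vsub C B = vsub (bc A B C 0 0 1) (bc A B C 0 1 0) by rewrite -bcB -bcC.
rewrite eCB eJ !vsub_bc dot_bc -?Ha -?Hb -?Hc.
- by field; rewrite an habc.
- by field; rewrite an habc.
- by ring.
Qed.

End Aux4.


Section Aux5.
Variable R : realFieldType.
Implicit Types (A B C P Q S X Y O J : pt R).

Lemma incenter_bc A B C I (a b c : R) :
  cross A B C != 0 -> 0 < a -> 0 < b -> 0 < c ->
  a ^+ 2 = sqdist B C -> b ^+ 2 = sqdist C A -> c ^+ 2 = sqdist A B ->
  is_incenter A B C I ->
  I = bc A B C (a / (a + b + c)) (b / (a + b + c)) (c / (a + b + c)).
Proof.
move=> hD ha hb hc Ha Hb Hc [h1 [h2 [hs1 [hs2 hs3]]]].
rewrite /sqdist_line -Ha -Hb -Hc in h1 h2.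
have hJ := bary_decomp I hD.
have hsum : cross B C I + cross C A I + cross A B I = cross A B C.
  by rewrite /cross; ring.
rewrite (cross_rot A B C) in hs1.
rewrite (cross_rot B C A) (cross_rot A B C) in hs2.
move: hJ hsum hs1 hs2 hs3 h1 h2.
set P := cross B C I; set Q := cross C A I; set S := cross A B I; set D := cross A B C.
move=> hJ hsum hs1 hs2 hs3 h1 h2.
have an : a != 0 by rewrite gt_eqF.
have bn : b != 0 by rewrite gt_eqF.
have cn : c != 0 by rewrite gt_eqF.
have eP : P = a * (P / a) by field.
have eQ : Q = b * (Q / b) by field.
have eS : S = c * (S / c) by field.
move: hJ hsum hs1 hs2 hs3 h1 h2; rewrite eP eQ eS.
set p := P / a; set q := Q / b; set r := S / c.
move=> hJ hsum hs1 hs2 hs3 h1 h2.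
have ek : forall k x : R, k != 0 -> (k * x) ^+ 2 / k ^+ 2 = x ^+ 2.
  by move=> k x hk; field.
rewrite !ek // in h1 h2.
have hp : 0 < p * D by move: hs1; rewrite -mulrA pmulr_rgt0.
have hq0 : 0 < q * D by move: hs2; rewrite -mulrA pmulr_rgt0.
have hr0 : 0 < r * D by move: hs3; rewrite -mulrA pmulr_rgt0.
have hq : q = p.
  case: (sq_cases h1) => // hq; exfalso; move: hq0; rewrite hq mulNr; lra.
have hr : r = p.
  have : p ^+ 2 = r ^+ 2 by rewrite h1 h2.
  case/sq_cases => // hr; exfalso; move: hr0; rewrite hr mulNr; lra.
rewrite hq hr in hsum hJ.
have habc : a + b + c != 0 by rewrite gt_eqF //; lra.
have hDn : D != 0 by [].
have ep : p = D / (a + b + c) by rewrite -hsum; field.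
by rewrite hJ ep; congr bc; field; rewrite habc hDn.
Qed.

End Aux5.


Section Aux6.
Variable R : realFieldType.
Implicit Types (A B C P Q S X Y O J : pt R).

Lemma ray_pt P Q X (d L : R) : on_ray P Q X -> sqdist X P = d ^+ 2 ->
  sqdist Q P = L ^+ 2 -> 0 < L -> 0 < d ->
  X = (P.1 + d / L * (Q.1 - P.1), P.2 + d / L * (Q.2 - P.2)).
Proof.
move=> [t [ht ->]] h hL L0 d0.
have e : sqdist (P.1 + t * (Q.1 - P.1), P.2 + t * (Q.2 - P.2)) P = t ^+ 2 * sqdist Q P.
  by rewrite /sqdist /dot /vsub /=; ring.
rewrite e hL in h.
have : (t * L - d) * (t * L + d) = 0.
  transitivity (t ^+ 2 * L ^+ 2 - d ^+ 2); first by ring.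
  by rewrite h subrr.
move/eqP; rewrite mulf_eq0 => /orP [] /eqP h'.
  have Ln : L != 0 by rewrite gt_eqF.
  have -> : d / L = t by rewrite (_ : d = t * L); [field | apply/eqP; rewrite eq_sym -subr_eq0 h'].
  by [].
exfalso; have : 0 <= t * L by rewrite mulr_ge0 // ltW.
lra.
Qed.

Lemma ray_bc A B C X (u1 v1 w1 u2 v2 w2 d L : R) :
  on_ray (bc A B C u1 v1 w1) (bc A B C u2 v2 w2) X ->
  sqdist X (bc A B C u1 v1 w1) = d ^+ 2 ->
  sqdist (bc A B C u2 v2 w2) (bc A B C u1 v1 w1) = L ^+ 2 -> 0 < L -> 0 < d ->
  X = bc A B C (u1 + d / L * (u2 - u1)) (v1 + d / L * (v2 - v1)) (w1 + d / L * (w2 - w1)).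
Proof.
move=> h1 h2 h3 h4 h5; rewrite (ray_pt h1 h2 h3 h4 h5) /bc /=; congr (_, _); ring.
Qed.

Lemma uniq_lines P1 Q1 P2 Q2 X Y :
  cross P1 Q1 X = 0 -> cross P1 Q1 Y = 0 -> cross P2 Q2 X = 0 -> cross P2 Q2 Y = 0 ->
  cross P1 Q1 (P1.1 + Q2.1 - P2.1, P1.2 + Q2.2 - P2.2) != 0 -> X = Y.
Proof.
move=> h1 h2 h3 h4 hn.
have e1 : cross P1 Q1 (P1.1 + Q2.1 - P2.1, P1.2 + Q2.2 - P2.2) * (X.1 - Y.1) = 0.
  transitivity (- (cross P2 Q2 X - cross P2 Q2 Y) * (Q1.1 - P1.1)
     + (cross P1 Q1 X - cross P1 Q1 Y) * (Q2.1 - P2.1)).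
    by rewrite /cross /=; ring.
  by rewrite h1 h2 h3 h4; ring.
have e2 : cross P1 Q1 (P1.1 + Q2.1 - P2.1, P1.2 + Q2.2 - P2.2) * (X.2 - Y.2) = 0.
  transitivity (- (cross P2 Q2 X - cross P2 Q2 Y) * (Q1.2 - P1.2)
     + (cross P1 Q1 X - cross P1 Q1 Y) * (Q2.2 - P2.2)).
    by rewrite /cross /=; ring.
  by rewrite h1 h2 h3 h4; ring.
move/eqP: e1; rewrite mulf_eq0 (negbTE hn) subr_eq0 /= => /eqP e1.
move/eqP: e2; rewrite mulf_eq0 (negbTE hn) subr_eq0 /= => /eqP e2.
by case: X Y e1 e2 {h1 h2 h3 h4} => x1 x2 [y1 y2] /= -> ->.
Qed.

Lemma bc_shift A B C (u1 v1 w1 u2 v2 w2 u3 v3 w3 : R) :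
  let P1 := bc A B C u1 v1 w1 in let Q2 := bc A B C u2 v2 w2 in
  let P2 := bc A B C u3 v3 w3 in
  (P1.1 + Q2.1 - P2.1, P1.2 + Q2.2 - P2.2) = bc A B C (u1 + u2 - u3) (v1 + v2 - v3) (w1 + w2 - w3).
Proof. by rewrite /bc /=; congr (_, _); ring. Qed.

End Aux6.


Section Aux7.
Variable R : realFieldType.
Implicit Types (A B C P Q S X Y O J : pt R).

Definition Qf P Q S X : R :=
  cross X Q S * cross P X S * sqdist P Q + cross P X S * cross P Q X * sqdist Q S
  + cross X Q S * cross P Q X * sqdist P S.

Lemma key_I A B C (a b c d : R) :
  a != 0 -> b != 0 -> c != 0 -> a + b + c != 0 ->
  a ^+ 2 = sqdist B C -> b ^+ 2 = sqdist C A -> c ^+ 2 = sqdist A B ->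
  let x := (b + c - a) / 2%:R in let y := (a + c - b) / 2%:R in let z := (a + b - c) / 2%:R in
  let A1 := bc A B C 0 ((y - d) / a) ((z + d) / a) in
  let B1 := bc A B C ((x + d) / b) 0 ((z - d) / b) in
  let C1 := bc A B C ((x - d) / c) ((y + d) / c) 0 in
  let A2 := bc A B C 0 ((y + d) / a) ((z - d) / a) in
  let B2 := bc A B C ((x - d) / b) 0 ((z + d) / b) in
  let C2 := bc A B C ((x + d) / c) ((y - d) / c) 0 in
  let X := bc A B C (a / (a + b + c)) (b / (a + b + c)) (c / (a + b + c)) in
  Qf A1 B1 C1 X * (cross A2 B2 C2) ^+ 2 = Qf A2 B2 C2 X * (cross A1 B1 C1) ^+ 2.
Proof.
move=> an bn cn sn Ha Hb Hc x y z A1 B1 C1 A2 B2 C2 X.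
rewrite /Qf /A1 /B1 /C1 /A2 /B2 /C2 /X.
rewrite !cross_bc; try (by rewrite /x /y /z; field; rewrite ?an ?bn ?cn ?sn).
rewrite !sqdist_bc; try (by rewrite /x /y /z; field; rewrite ?an ?bn ?cn ?sn).
rewrite -Ha -Hb -Hc /det3 /x /y /z.
by field; rewrite ?an ?bn ?cn ?sn.
Qed.
Lemma key_N A B C (a b c d : R) :
  a != 0 -> b != 0 -> c != 0 -> a + b + c != 0 ->
  a ^+ 2 = sqdist B C -> b ^+ 2 = sqdist C A -> c ^+ 2 = sqdist A B ->
  let x := (b + c - a) / 2%:R in let y := (a + c - b) / 2%:R in let z := (a + b - c) / 2%:R in
  let A1 := bc A B C 0 ((y - d) / a) ((z + d) / a) in
  let B1 := bc A B C ((x + d) / b) 0 ((z - d) / b) in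
  let C1 := bc A B C ((x - d) / c) ((y + d) / c) 0 in
  let A2 := bc A B C 0 ((y + d) / a) ((z - d) / a) in
  let B2 := bc A B C ((x - d) / b) 0 ((z + d) / b) in
  let C2 := bc A B C ((x + d) / c) ((y - d) / c) 0 in
  let X := bc A B C ((b + c - a) / (a + b + c)) ((a + c - b) / (a + b + c)) ((a + b - c) / (a + b + c)) in
  Qf A1 B1 C1 X * (cross A2 B2 C2) ^+ 2 = Qf A2 B2 C2 X * (cross A1 B1 C1) ^+ 2.
Proof.
move=> an bn cn sn Ha Hb Hc x y z A1 B1 C1 A2 B2 C2 X.
rewrite /Qf /A1 /B1 /C1 /A2 /B2 /C2 /X.
rewrite !cross_bc; try (by rewrite /x /y /z; field; rewrite ?an ?bn ?cn ?sn).
rewrite !sqdist_bc; try (by rewrite /x /y /z; field; rewrite ?an ?bn ?cn ?sn).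
rewrite -Ha -Hb -Hc /det3 /x /y /z.
by field; rewrite ?an ?bn ?cn ?sn.
Qed.
Lemma key_G A B C (a b c d : R) :
  a != 0 -> b != 0 -> c != 0 -> a + b + c != 0 ->
  a ^+ 2 = sqdist B C -> b ^+ 2 = sqdist C A -> c ^+ 2 = sqdist A B ->
  let x := (b + c - a) / 2%:R in let y := (a + c - b) / 2%:R in let z := (a + b - c) / 2%:R in
  let A1 := bc A B C 0 ((y - d) / a) ((z + d) / a) in
  let B1 := bc A B C ((x + d) / b) 0 ((z - d) / b) in
  let C1 := bc A B C ((x - d) / c) ((y + d) / c) 0 in
  let A2 := bc A B C 0 ((y + d) / a) ((z - d) / a) in
  let B2 := bc A B C ((x - d) / b) 0 ((z + d) / b) in
  let C2 := bc A B C ((x + d) / c) ((y - d) / c) 0 in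
  let X := bc A B C (1 / 3%:R) (1 / 3%:R) (1 / 3%:R) in
  Qf A1 B1 C1 X * (cross A2 B2 C2) ^+ 2 = Qf A2 B2 C2 X * (cross A1 B1 C1) ^+ 2.
Proof.
move=> an bn cn sn Ha Hb Hc x y z A1 B1 C1 A2 B2 C2 X.
rewrite /Qf /A1 /B1 /C1 /A2 /B2 /C2 /X.
rewrite !cross_bc; try (by rewrite /x /y /z; field; rewrite ?an ?bn ?cn ?sn).
rewrite !sqdist_bc; try (by rewrite /x /y /z; field; rewrite ?an ?bn ?cn ?sn).
rewrite -Ha -Hb -Hc /det3 /x /y /z.
by field; rewrite ?an ?bn ?cn ?sn.
Qed.
End Aux7.


Section Aux8.
Variable R : realFieldType.
Implicit Types (A B C P Q S X Y O J : pt R).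

Lemma sqdist_nz P Q X : cross P Q X != 0 -> sqdist P Q != 0.
Proof.
move=> h; apply/eqP => h0.
have := lagrange_id P Q X; rewrite h0 mul0r => e.
have h1 : 0 < cross P Q X ^+ 2 by rewrite exprn_even_gt0.
have h2 := sqr_ge0 (dot (vsub X P) (vsub Q P)).
lra.
Qed.

Lemma power_eq P Q S O X : is_circumcenter P Q S O -> cross P Q S != 0 ->
  power O P X = - Qf P Q S X / cross P Q S ^+ 2.
Proof.
move=> hc hn; have := power_bary X hc; rewrite /Qf => <-.
by field.
Qed.

Lemma frac_eq (q1 q2 d1 d2 : R) : d1 != 0 -> d2 != 0 ->
  q1 * d2 ^+ 2 - q2 * d1 ^+ 2 = 0 -> - q1 / d1 ^+ 2 = - q2 / d2 ^+ 2.
Proof.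
move=> h1 h2 e.
have e' : q1 = q2 * d1 ^+ 2 / d2 ^+ 2.
  apply: (mulIf (expf_neq0 2 h2)); rewrite mulfVK ?expf_neq0 //.
  by apply/eqP; rewrite -subr_eq0 e.
by rewrite e'; field; rewrite ?h1 ?h2.
Qed.

Lemma centroid_bc A B C : centroid A B C = bc A B C (1 / 3%:R) (1 / 3%:R) (1 / 3%:R).
Proof. by rewrite /centroid /bc /=; congr (_, _); field. Qed.

Lemma ray_bc' A B C P Q X (u1 v1 w1 u2 v2 w2 d L : R) :
  P = bc A B C u1 v1 w1 -> Q = bc A B C u2 v2 w2 ->
  on_ray P Q X -> sqdist X P = d ^+ 2 -> sqdist Q P = L ^+ 2 -> 0 < L -> 0 < d ->
  X = bc A B C (u1 + d / L * (u2 - u1)) (v1 + d / L * (v2 - v1)) (w1 + d / L * (w2 - w1)).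
Proof. by move=> -> ->; apply: ray_bc. Qed.

End Aux8.

Unset Implicit Arguments. Set Strict Implicit. Set Printing Implicit Defensive.

Lemma eq_neq0 (R : realFieldType) (x y : R) : x = y -> y != 0 -> x != 0.
Proof. by move=> ->. Qed.

Theorem theorem1p1 (R : realFieldType)
  (A B C A0 B0 C0 N I : pt R) (d : R)
  (A1 A2 B1 B2 C1 C2 O1 O2 : pt R) :
  nondeg_tri A B C ->
  excircle_touch A B C A0 -> excircle_touch B C A B0 -> excircle_touch C A B C0 ->
  on_line A A0 N -> on_line B B0 N -> on_line C C0 N ->
  is_incenter A B C I ->
  0 < d ->
  on_ray A0 C A1 -> on_ray B0 A B1 -> on_ray C0 B C1 ->
  on_ray A0 B A2 -> on_ray B0 C B2 -> on_ray C0 A C2 ->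
  sqdist A1 A0 = d ^+ 2 -> sqdist A2 A0 = d ^+ 2 ->
  sqdist B1 B0 = d ^+ 2 -> sqdist B2 B0 = d ^+ 2 ->
  sqdist C1 C0 = d ^+ 2 -> sqdist C2 C0 = d ^+ 2 ->
  nondeg_tri A1 B1 C1 -> nondeg_tri A2 B2 C2 ->
  is_circumcenter A1 B1 C1 O1 -> is_circumcenter A2 B2 C2 O2 ->
  on_radical_axis O1 A1 O2 A2 N /\
  on_radical_axis O1 A1 O2 A2 (centroid A B C) /\
  on_radical_axis O1 A1 O2 A2 I.
Proof.
move=> hD hA0 hB0 hC0 hN1 hN2 hN3 hI hd hA1 hB1 hC1 hA2 hB2 hC2
  dA1 dA2 dB1 dB2 dC1 dC2 hT1 hT2 hO1 hO2.
have hDB : cross B C A != 0 by rewrite cross_rot.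
have hDC : cross C A B != 0 by rewrite cross_rot cross_rot.
have hBC : sqdist B C != 0 := sqdist_nz hDB.
have hCA : sqdist C A != 0 := sqdist_nz hDC.
have hAB : sqdist A B != 0 := sqdist_nz hD.
have lA0 : on_line B C A0 by case: hA0 => J [_ [h _]].
have lB0 : on_line C A B0 by case: hB0 => J [_ [h _]].
have lC0 : on_line A B C0 by case: hC0 => J [_ [h _]].
have [a [ha Ha]] := len_exists hBC lA0 hA2 dA2 hd.
have [b [hb Hb]] := len_exists hCA lB0 hB2 dB2 hd.
have [c [hc Hc]] := len_exists hAB lC0 hC2 dC2 hd.
have t1 := tri_ineq hD ha hb hc Ha Hb Hc.
have t2 := tri_ineq hDB hb hc ha Hb Hc Ha.
have t3 := tri_ineq hDC hc ha hb Hc Ha Hb.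
have eA0 := excenter_foot hD ha hb hc Ha Hb Hc t1 t2 t3 hA0.
have eB0 := excenter_foot hDB hb hc ha Hb Hc Ha t2 t3 t1 hB0.
have eC0 := excenter_foot hDC hc ha hb Hc Ha Hb t3 t1 t2 hC0.
rewrite bc_rot in eB0; rewrite bc_rot bc_rot in eC0.
have an : a != 0 by rewrite gt_eqF.
have bn : b != 0 by rewrite gt_eqF.
have cn : c != 0 by rewrite gt_eqF.
have sn : a + b + c != 0 by rewrite gt_eqF //; lra.
have xp : 0 < (b + c - a) / 2%:R by apply: divr_gt0; lra.
have yp : 0 < (a + c - b) / 2%:R by apply: divr_gt0; lra.
have zp : 0 < (a + b - c) / 2%:R by apply: divr_gt0; lra.
have xn : b + c - a != 0 by rewrite gt_eqF //; lra.
have yn : a + c - b != 0 by rewrite gt_eqF //; lra.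
have zn : a + b - c != 0 by rewrite gt_eqF //; lra.
have LA1 : sqdist C A0 = ((a + c - b) / 2%:R) ^+ 2.
  by rewrite eA0 {1}(bcC A B C) sqdist_bc -?Ha -?Hb -?Hc; field; rewrite ?an ?bn ?cn.
have LA2 : sqdist B A0 = ((a + b - c) / 2%:R) ^+ 2.
  by rewrite eA0 {1}(bcB A B C) sqdist_bc -?Ha -?Hb -?Hc; field; rewrite ?an ?bn ?cn.
have LB1 : sqdist A B0 = ((a + b - c) / 2%:R) ^+ 2.
  by rewrite eB0 {1}(bcA A B C) sqdist_bc -?Ha -?Hb -?Hc; field; rewrite ?an ?bn ?cn.
have LB2 : sqdist C B0 = ((b + c - a) / 2%:R) ^+ 2.
  by rewrite eB0 {1}(bcC A B C) sqdist_bc -?Ha -?Hb -?Hc; field; rewrite ?an ?bn ?cn.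
have LC1 : sqdist B C0 = ((b + c - a) / 2%:R) ^+ 2.
  by rewrite eC0 {1}(bcB A B C) sqdist_bc -?Ha -?Hb -?Hc; field; rewrite ?an ?bn ?cn.
have LC2 : sqdist A C0 = ((a + c - b) / 2%:R) ^+ 2.
  by rewrite eC0 {1}(bcA A B C) sqdist_bc -?Ha -?Hb -?Hc; field; rewrite ?an ?bn ?cn.
have eA1 : A1 = bc A B C 0 (((a + c - b) / 2%:R - d) / a) (((a + b - c) / 2%:R + d) / a).
  by rewrite (ray_bc' eA0 (bcC A B C) hA1 dA1 LA1 yp hd); congr bc; field; rewrite ?an ?bn ?cn ?xn ?yn ?zn.
have eA2 : A2 = bc A B C 0 (((a + c - b) / 2%:R + d) / a) (((a + b - c) / 2%:R - d) / a).
  by rewrite (ray_bc' eA0 (bcB A B C) hA2 dA2 LA2 zp hd); congr bc; field; rewrite ?an ?bn ?cn ?xn ?yn ?zn.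
have eB1 : B1 = bc A B C (((b + c - a) / 2%:R + d) / b) 0 (((a + b - c) / 2%:R - d) / b).
  by rewrite (ray_bc' eB0 (bcA A B C) hB1 dB1 LB1 zp hd); congr bc; field; rewrite ?an ?bn ?cn ?xn ?yn ?zn.
have eB2 : B2 = bc A B C (((b + c - a) / 2%:R - d) / b) 0 (((a + b - c) / 2%:R + d) / b).
  by rewrite (ray_bc' eB0 (bcC A B C) hB2 dB2 LB2 xp hd); congr bc; field; rewrite ?an ?bn ?cn ?xn ?yn ?zn.
have eC1 : C1 = bc A B C (((b + c - a) / 2%:R - d) / c) (((a + c - b) / 2%:R + d) / c) 0.
  by rewrite (ray_bc' eC0 (bcB A B C) hC1 dC1 LC1 xp hd); congr bc; field; rewrite ?an ?bn ?cn ?xn ?yn ?zn.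
have eC2 : C2 = bc A B C (((b + c - a) / 2%:R + d) / c) (((a + c - b) / 2%:R - d) / c) 0.
  by rewrite (ray_bc' eC0 (bcA A B C) hC2 dC2 LC2 yp hd); congr bc; field; rewrite ?an ?bn ?cn ?xn ?yn ?zn.
have eI := incenter_bc hD ha hb hc Ha Hb Hc hI.
have eN : N = bc A B C ((b + c - a) / (a + b + c)) ((a + c - b) / (a + b + c)) ((a + b - c) / (a + b + c)).
  apply: (uniq_lines (P1:=A) (Q1:=A0) (P2:=B) (Q2:=B0) hN1 _ hN2).
  - rewrite eA0 {1}(bcA A B C) cross_bc /det3; try by field; rewrite ?an ?bn ?cn ?sn.
  - rewrite eB0 {1}(bcB A B C) cross_bc /det3; try by field; rewrite ?an ?bn ?cn ?sn.
  have -> : (A.1 + B0.1 - B.1, A.2 + B0.2 - B.2) =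
      bc A B C (1 + (b + c - a) / (2 * b)) (-1) ((b + a - c) / (2 * b)).
    by rewrite eB0 /bc /=; congr (_, _); ring.
  rewrite eA0 {1}(bcA A B C) cross_bc /det3; try by field; rewrite ?an ?bn ?cn ?sn.
  rewrite mulf_neq0 //.
  apply: (@eq_neq0 _ _ (((a + b - c) / 2%:R * ((a + c - b) / 2%:R + b)) / (a * b))).
    by field; rewrite ?an ?bn ?cn ?sn.
  by rewrite gt_eqF // divr_gt0 ?mulr_gt0 //; lra.
rewrite /on_radical_axis !(power_eq _ hO1 hT1) !(power_eq _ hO2 hT2).
split; last split.
- apply: frac_eq; [exact: hT1 | exact: hT2 |].
  rewrite eA1 eB1 eC1 eA2 eB2 eC2 eN.
  have k := key_N d an bn cn sn Ha Hb Hc; cbv zeta in k.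
  by rewrite k subrr.
- apply: frac_eq; [exact: hT1 | exact: hT2 |].
  rewrite eA1 eB1 eC1 eA2 eB2 eC2 centroid_bc.
  have k := key_G d an bn cn sn Ha Hb Hc; cbv zeta in k.
  by rewrite k subrr.
- apply: frac_eq; [exact: hT1 | exact: hT2 |].
  rewrite eA1 eB1 eC1 eA2 eB2 eC2 eI.
  have k := key_I d an bn cn sn Ha Hb Hc; cbv zeta in k.
  by rewrite k subrr.
Qed.
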